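(* Let $q$ be a prime power, $k,b$ positive integers, and $\boldsymbol{x},\boldsymbol{y}\in\mathbb{F}_q^k$ with $0<d_b(\boldsymbol{x},\boldsymbol{y})<k$. Then $d_{b+1}(\boldsymbol{x},\boldsymbol{y})\ge d_b(\boldsymbol{x},\boldsymbol{y})+1$.
   Context: For $\boldsymbol{x}=(x_0,\ldots,x_{k-1})$, $\boldsymbol{y}=(y_0,\ldots,y_{k-1})\in\mathbb{F}_q^k$ and a positive integer $c$, the $c$-symbol distance $d_c(\boldsymbol{x},\boldsymbol{y})$ is the number of indices $i\in\{0,\ldots,k-1\}$ with $(x_i,x_{i+1},\ldots,x_{i+c-1})\ne(y_i,y_{i+1},\ldots,y_{i+c-1})$, indices taken modulo $k$. *)

(* Defs.v *)
From mathcomp Require Import all_boot all_algebra all_field.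
Set Implicit Arguments. Unset Strict Implicit. Unset Printing Implicit Defensive.

(* Vectors of F_q^k are represented as {ffun 'I_k -> F} with F a finite field
   (so |F| = q is a prime power). *)

(* cyclic index: x_{n mod k} for a vector of length k (when k = 0 the
   vector type is empty-indexed, we return the default value). *)
Definition cidx {F : Type} (k : nat) (x : {ffun 'I_k -> F}) (d : F) (n : nat) : F :=
  match k as m return {ffun 'I_m -> F} -> F with
  | 0 => fun _ => d
  | m.+1 => fun y => y (inord (n %% m.+1))
  end x.

Definition csym {F : finFieldType} (k c : nat) (x : {ffun 'I_k -> F}) (i : nat) : seq F :=
  [seq cidx x 0%R (i + j) | j <- iota 0 c].

Definition csym_dist {F : finFieldType} (k c : nat) (x y : {ffun 'I_k -> F}) : nat :=
  #|[set i : 'I_k | csym c x i != csym c y i]|.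

(* Main.v *)
Require Import Defs.
From mathcomp Require Import all_boot all_algebra all_field.
From mathcomp Require Import zify.

Lemma cidx_per (F : Type) k (x : {ffun 'I_k -> F}) d n :
  cidx x d (n + k) = cidx x d n.
Proof. by case: k x => [|m] x //=; rewrite modnDr. Qed.

Lemma csym_per (F : finFieldType) k c (x : {ffun 'I_k -> F}) n :
  csym c x (n + k) = csym c x n.
Proof. by rewrite /csym; apply: eq_map => j; rewrite addnAC cidx_per. Qed.

Lemma csym_mod (F : finFieldType) k c (x : {ffun 'I_k -> F}) n :
  csym c x (n %% k) = csym c x n.
Proof.
rewrite {2}(divn_eq n k); elim: (n %/ k) => [|q IH]; first by rewrite mul0n add0n.
have ->: q.+1 * k + n %% k = (q * k + n %% k) + k by rewrite mulSn; lia.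
by rewrite csym_per.
Qed.

Lemma csym_rcons (F : finFieldType) k c (x : {ffun 'I_k -> F}) i :
  csym c.+1 x i = rcons (csym c x i) (cidx x 0%R (i + c)).
Proof. by rewrite /csym -addn1 iotaD map_cat /= cats1 add0n. Qed.

Lemma csym_cons (F : finFieldType) k c (x : {ffun 'I_k -> F}) i :
  csym c.+1 x i = cidx x 0%R i :: csym c x i.+1.
Proof.
rewrite /csym /= addn0; congr (_ :: _).
rewrite (iotaDl 1 0) -map_comp; apply: eq_map => j /=; by rewrite addnA addn1.
Qed.

Lemma dist_step (F : finFieldType) k c (x y : {ffun 'I_k -> F}) i :
  (csym c x i != csym c y i) || (csym c x i.+1 != csym c y i.+1) ->
  csym c.+1 x i != csym c.+1 y i.
Proof.
apply: contraL => /eqP E; apply/norP; split; apply/negPn/eqP.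
  by move: E; rewrite !csym_rcons => /rcons_inj [].
by move: E; rewrite !csym_cons => -[].
Qed.

Theorem proposition2p1 (F : finFieldType) (k b : nat) (x y : {ffun 'I_k -> F}) :
  0 < k -> 0 < b ->
  0 < csym_dist b x y -> csym_dist b x y < k ->
  csym_dist b.+1 x y >= (csym_dist b x y).+1.
Proof.
move=> kpos _; rewrite /csym_dist.
set D := fun n => csym b x n != csym b y n.
set D' := fun n => csym b.+1 x n != csym b.+1 y n.
have Dmod n : D (n %% k) = D n by rewrite /D !csym_mod.
have D'mod n : D' (n %% k) = D' n by rewrite /D' !csym_mod.
have DD' n : D n || D n.+1 -> D' n by apply: dist_step.
set S := [set i : 'I_k | D i].
set S' := [set i : 'I_k | D' i].
move=> /card_gt0P [j jS] ltSk.
have: [exists m : 'I_k, m \notin S].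
  apply: contraT => /existsPn H.
  have ES: S = setT by apply/setP => i; rewrite [in RHS]inE; apply/negPn; exact: H.
  by move: ltSk; rewrite ES cardsT card_ord ltnn.
move=> /existsP [m mS].
have: [exists t : 'I_k, ~~ D (m + t) && D (m + t).+1].
  apply: contraT => /existsPn H.
  have Hall : forall t, t < k -> ~~ D (m + t).
    elim=> [|t IH] lt; first by rewrite addn0; move: mS; rewrite inE.
    have := H (Ordinal (ltnW lt)); rewrite /= (IH (ltnW lt)) /= addnS.
    by [].
  have tk : (j + k - m) %% k < k by rewrite ltn_pmod.
  move: (Hall _ tk); rewrite -Dmod modnDmr.
  have ->: m + (j + k - m) = j + k by have := ltn_ord m; lia.
  by rewrite modnDr modn_small //; move: jS; rewrite inE => ->.
move=> /existsP [t /andP [nD D1]].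
have i0lt : (m + t) %% k < k by rewrite ltn_pmod.
set i0 := Ordinal i0lt.
have i0S : i0 \notin S by rewrite inE /= Dmod.
have i0S' : i0 \in S' by rewrite inE /= D'mod; apply: DD'; rewrite D1 orbT.
have sub : i0 |: S \subset S'.
  apply/subsetP => i; rewrite !inE => /orP [/eqP -> | Di]; first by move: i0S'; rewrite inE.
  by apply: DD'; rewrite Di.
by move: (subset_leq_card sub); rewrite cardsU1 i0S.
Qed.
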